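(* Let $\mathcal{M}$ be a finite set of models, each model $\mathfrak{m}$ consisting of at most $Q$ features, with prior $p(\mathfrak{m})$ and marginal likelihood $p(\boldsymbol{y}\mid\mathfrak{m})>0$, and posterior $p(\mathfrak{m}\mid\boldsymbol{y}) = p(\mathfrak{m})p(\boldsymbol{y}\mid\mathfrak{m})/\sum_{\mathfrak{m}'\in\mathcal{M}}p(\mathfrak{m}')p(\boldsymbol{y}\mid\mathfrak{m}')$. Run the GMJMCMC algorithm for $T_{\max}$ population iterations, producing populations $\mathcal{S}_1,\dots,\mathcal{S}_{T_{\max}}$, each a set of $s$ features, and let $M_{\mathcal{S}_t}$ be the set of models visited at iteration $t$ within search space $\mathcal{S}_t$. Let $\mathcal{M}^*$ be the set of all models visited by the algorithm and define \[ \widehat{p}(\mathfrak{m}\mid\boldsymbol{y}) = \frac{p(\mathfrak{m})p(\boldsymbol{y}\mid\mathfrak{m})}{\sum_{\mathfrak{m}'\in\mathcal{M}^*}p(\mathfrak{m}')p(\boldsymbol{y}\mid\mathfrak{m}')}\,\mathrm{I}(\mathfrak{m}\in\mathcal{M}^* ). \] Assume $s\ge Q$ and that $\{(\mathcal{S}_t,M_{\mathcal{S}_t})\}_t$ forms an irreducible Markov chain over its (finite) set of possible states. Then $\widehat{p}(\mathfrak{m}\mid\boldsymbol{y})$ converges to $p(\mathfrak{m}\mid\boldsymbol{y})$ for every model $\mathfrak{m}$ as $T_{\max}\to\infty$.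
   Context: GMJMCMC (genetically modified mode jumping MCMC) is a model search algorithm: at each iteration $t$ it holds a population $\mathcal{S}_t$ of $s$ features (transformations of input covariates), runs an MCMC (mode-jumping MCMC) over the models whose features all belong to $\mathcal{S}_t$ (visiting the model set $M_{\mathcal{S}_t}$, including auxiliary models used to construct proposals), and then generates a new population $\mathcal{S}_{t+1}$ from $\mathcal{S}_t$ by random operators (filtration, mutation, modification, crossover, projection). The model space $\mathcal{M}$ consists of all subsets of at most $Q$ features from a finite feature space. A model is identified with the set of features it includes. *)

(* Defs.v *)
From HB Require Import structures.
From mathcomp Require Import all_boot all_order all_algebra.
From mathcomp Require Import all_classical all_reals all_analysis.
Set Implicit Arguments. Unset Strict Implicit. Unset Printing Implicit Defensive.
Import Order.TTheory GRing.Theory Num.Theory.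
Import numFieldNormedType.Exports.
Local Open Scope classical_set_scope.
Local Open Scope ring_scope.

Definition model_space (F : finType) (Q : nat) : {set {set F}} :=
  [set m : {set F} | (#|m| <= Q)%N].

Definition weight (R : realType) (F : finType) (prior lik : {set F} -> R) (m : {set F}) : R :=
  prior m * lik m.

(* Posterior p(m|y) over a set of models A (A = model space: true posterior;
   A = visited models: the renormalized estimate, with indicator). *)
Definition renorm_post (R : realType) (F : finType) (prior lik : {set F} -> R)
  (A : {set {set F}}) (m : {set F}) : R :=
  if m \in A then weight prior lik m / \sum_(m' in A) weight prior lik m' else 0.

Fixpoint kpow (R : realType) (St : finType) (K : St -> St -> R) (n : nat) (x y : St) : R :=
  if n is n'.+1 then \sum_(z : St) K x z * kpow K n' z y else (x == y)%:R.

Definition stochastic (R : realType) (St : finType) (K : St -> St -> R) : Prop :=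
  (forall x y, 0 <= K x y) /\ (forall x, \sum_(y : St) K x y = 1).

Definition irreducible (R : realType) (St : finType) (K : St -> St -> R) : Prop :=
  forall x y, exists n, 0 < kpow K n x y.

Definition path_ev (T : Type) (St : Type) (X : nat -> T -> St) (n : nat) (f : nat -> St)
  : set T := [set w | forall i, (i <= n)%N -> X i w = f i].

Definition markov_chain (d : measure_display) (T : measurableType d) (R : realType)
  (P : probability T R) (St : finType) (X : nat -> T -> St) (K : St -> St -> R) : Prop :=
  stochastic K /\
  (forall n x, measurable [set w | X n w = x]) /\
  (forall n f, P (path_ev X n.+1 f) = (P (path_ev X n f) * (K (f n) (f n.+1))%:E)%E).

Definition visited (T : Type) (St : Type) (F : finType) (vis : St -> {set {set F}})
  (X : nat -> T -> St) (Tmax : nat) (w : T) : {set {set F}} :=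
  \bigcup_(t < Tmax) vis (X t w).

(* Main.v *)
Require Import Defs.
From HB Require Import structures.
From mathcomp Require Import all_boot all_order all_algebra.
From mathcomp Require Import all_classical all_reals all_analysis.
Import Order.TTheory GRing.Theory Num.Theory.
Import numFieldNormedType.Exports.
Local Open Scope classical_set_scope.
Local Open Scope ring_scope.
Set Implicit Arguments. Unset Strict Implicit. Unset Printing Implicit Defensive.

Definition pr d (T : measurableType d) (R : realType) (P : probability T R) (A : set T) : R :=
  fine (P A).

Lemma prE d (T : measurableType d) (R : realType) (P : probability T R) (A : set T) :
  measurable A -> P A = (pr P A)%:E.
Proof. by move=> mA; rewrite /pr fineK // (fin_num_measure P A mA). Qed.

Lemma pr_ge0 d (T : measurableType d) (R : realType) (P : probability T R) (A : set T) :
  0 <= pr P A.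
Proof. by rewrite /pr fine_ge0. Qed.

Lemma pr_le1 d (T : measurableType d) (R : realType) (P : probability T R) (A : set T) :
  measurable A -> pr P A <= 1.
Proof. by move=> mA; rewrite -lee_fin -prE // probability_le1. Qed.

Lemma pr0 d (T : measurableType d) (R : realType) (P : probability T R) :
  pr P set0 = 0.
Proof. by rewrite /pr measure0. Qed.

Lemma prU d (T : measurableType d) (R : realType) (P : probability T R) (A B : set T) :
  measurable A -> measurable B -> A `&` B = set0 -> pr P (A `|` B) = pr P A + pr P B.
Proof.
move=> mA mB AB.
have : P (A `|` B) = (P A + P B)%E := measureU P mA mB AB.
have mAB : measurable (A `|` B) by exact: measurableU.
rewrite (@prE _ _ _ P A mA) (@prE _ _ _ P B mB) (@prE _ _ _ P _ mAB).
by case.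
Qed.

Lemma pr_le d (T : measurableType d) (R : realType) (P : probability T R) (A B : set T) :
  measurable A -> measurable B -> A `<=` B -> pr P A <= pr P B.
Proof.
by move=> mA mB AB; rewrite -lee_fin -!prE // le_measure // inE.
Qed.

Definition cyl (T : Type) (St : finType) (X : nat -> T -> St) (S : nat -> {set St}) (n : nat)
  : set T := [set w | forall i, (i <= n)%N -> X i w \in S i].

Definition upd (St : finType) (S : nat -> {set St}) (k : nat) (A : {set St}) :=
  fun i => if i == k then A else S i.

Lemma mem_meas d (T : measurableType d) (St : finType) (X : nat -> T -> St)
  (mev : forall n x, measurable [set w | X n w = x]) i (A : {set St}) :
  measurable [set w | X i w \in A].
Proof.
have H : forall s : seq St, measurable [set w | X i w \in s].
  elim => [|x s IH].
    have -> : [set w | X i w \in [::]] = set0 by apply/seteqP; split => w //=.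
    exact: measurable0.
  have -> : [set w | X i w \in x :: s] = [set w | X i w = x] `|` [set w | X i w \in s].
    apply/seteqP; split => w /=; rewrite in_cons.
      by move=> /orP[/eqP->|H]; [left|right].
    by move=> [->|H]; [rewrite eqxx|rewrite H orbT].
  exact: measurableU.
have -> : [set w | X i w \in A] = [set w | X i w \in enum A].
  by apply/seteqP; split => w /=; rewrite mem_enum.
exact: H.
Qed.

Lemma cylS (T : Type) (St : finType) (X : nat -> T -> St) S n :
  cyl X S n.+1 = cyl X S n `&` [set w | X n.+1 w \in S n.+1].
Proof.
apply/seteqP; split => w /=.
  by move=> H; split; [move=> i Hi; apply: H; exact: leqW|apply: H].
move=> [H1 H2] i; rewrite leq_eqVlt => /orP[/eqP->//|]; rewrite ltnS; exact: H1.
Qed.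

Lemma cyl0 (T : Type) (St : finType) (X : nat -> T -> St) S :
  cyl X S 0 = [set w | X 0 w \in S 0].
Proof.
apply/seteqP; split => w /=; first by apply.
by move=> H i; rewrite leqn0 => /eqP->.
Qed.

Lemma cyl_meas d (T : measurableType d) (St : finType) (X : nat -> T -> St)
  (mev : forall n x, measurable [set w | X n w = x]) S n :
  measurable (cyl X S n).
Proof.
elim: n => [|n IH]; first by rewrite cyl0; exact: mem_meas.
rewrite cylS; apply: measurableI => //; exact: mem_meas.
Qed.

Lemma cyl_split (T : Type) (St : finType) (X : nat -> T -> St) (S : nat -> {set St})
  (n k : nat) (a : St) :
  a \in S k ->
  cyl X S n = cyl X (upd S k [set a]%SET) n `|` cyl X (upd S k (S k :\ a)) n.
Proof.
move=> aS; apply/seteqP; split => w /=.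
  move=> H; case: (boolP (X k w == a)) => Ha.
    left => i Hi; rewrite /upd; case: ifP => [/eqP Eik|_]; last exact: H.
    by rewrite Eik inE.
  right => i Hi; rewrite /upd; case: ifP => [/eqP Eik|_]; last exact: H.
  by rewrite in_setD1 -Eik (H i Hi) andbT; rewrite Eik.
move=> [] H i Hi; have := H i Hi; rewrite /upd; case: ifP => // /eqP ->.
  by rewrite inE => /eqP->.
by rewrite in_setD1 => /andP[].
Qed.

Lemma cyl_disj (T : Type) (St : finType) (X : nat -> T -> St) (S : nat -> {set St})
  (n k : nat) (a : St) w : (k <= n)%N ->
  cyl X (upd S k [set a]%SET) n w -> cyl X (upd S k (S k :\ a)) n w -> False.
Proof.
move=> kn H1 H2; have := H1 k kn; have := H2 k kn; rewrite /upd eqxx.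
by rewrite !inE => /andP[/negbTE->].
Qed.

Lemma path_cyl (T : Type) (St : finType) (X : nat -> T -> St) n (f : nat -> St) :
  path_ev X n f = cyl X (fun i => [set f i]%SET) n.
Proof.
by apply/seteqP; split => w /= H i Hi; [rewrite inE (H i Hi)|have := H i Hi; rewrite inE => /eqP].
Qed.

Lemma prI_split d (T : measurableType d) (R : realType) (P : probability T R)
  (St : finType) (X : nat -> T -> St)
  (mev : forall n x, measurable [set w | X n w = x]) (S : nat -> {set St})
  (n k : nat) (a : St) (E : set T) : (k <= n)%N -> a \in S k -> measurable E ->
  pr P (cyl X S n `&` E) =
  pr P (cyl X (upd S k [set a]%SET) n `&` E) + pr P (cyl X (upd S k (S k :\ a)) n `&` E).
Proof.
move=> kn aS mE; rewrite (cyl_split X n aS) setIUl prU //.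
- by apply: measurableI => //; exact: cyl_meas.
- by apply: measurableI => //; exact: cyl_meas.
apply/seteqP; split => w //= [[H1 _] [H2 _]]; exact: (cyl_disj kn H1 H2).
Qed.

Lemma mu_upd (St : finType) (S : nat -> {set St}) N k (A : {set St}) :
  (k <= N)%N -> (#|A| < #|S k|)%N ->
  (\sum_(i < N.+1) #|upd S k A i| < \sum_(i < N.+1) #|S i|)%N.
Proof.
move=> kN HA; have kN1 : (k < N.+1)%N by [].
rewrite (bigD1 (Ordinal kN1)) //= [X in (_ < X)%N](bigD1 (Ordinal kN1)) //=.
rewrite /upd eqxx (eq_bigr (fun i : 'I_N.+1 => #|S i|)) ?ltn_add2r //.
move=> i Hi; rewrite ifN //; apply: contra Hi => /eqP Hik; apply/eqP; exact: val_inj.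
Qed.

Lemma path_meas d (T : measurableType d) (St : finType) (X : nat -> T -> St)
  (mev : forall n x, measurable [set w | X n w = x]) n f :
  measurable (path_ev X n f).
Proof. rewrite path_cyl; exact: cyl_meas. Qed.

Lemma markov1_single d (T : measurableType d) (R : realType) (P : probability T R)
  (St : finType) (X : nat -> T -> St) (K : St -> St -> R)
  (mev : forall n x, measurable [set w | X n w = x])
  (Hpath : forall n f, P (path_ev X n.+1 f) = (P (path_ev X n f) * (K (f n) (f n.+1))%:E)%E)
  (N : nat) (S : nat -> {set St}) (z' : St) :
  (forall i, (i <= N)%N -> #|S i| = 1%N) ->
  pr P (cyl X S N `&` [set w | X N.+1 w = z']) =
  \sum_(z : St) pr P (cyl X S N `&` [set w | X N w = z]) * K z z'.
Proof.
move=> H1; pose f i := odflt z' [pick x in S i].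
have Sf : forall i, (i <= N)%N -> S i = [set f i]%SET.
  move=> i Hi; have [x Hx] := cards1P (introT eqP (H1 i Hi)); rewrite /f Hx.
  case: pickP => [y|/(_ x)]; last by rewrite inE eqxx.
  by rewrite inE => /eqP ->.
have Ecyl : cyl X S N = path_ev X N f.
  apply/seteqP; split => w /= H i Hi.
    by have := H i Hi; rewrite Sf // inE => /eqP.
  by rewrite Sf // inE H.
pose g i := if i == N.+1 then z' else f i.
have gf : forall i, (i <= N)%N -> g i = f i by move=> i Hi; rewrite /g ltn_eqF.
have Epath : path_ev X N g = path_ev X N f.
  by apply/seteqP; split => w /= H i Hi; [rewrite -gf // H | rewrite gf // H].
have E1 : cyl X S N `&` [set w | X N.+1 w = z'] = path_ev X N.+1 g.
  rewrite Ecyl; apply/seteqP; split => w /=.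
    move=> [H Hz] i; rewrite leq_eqVlt => /orP[/eqP->|]; first by rewrite /g eqxx.
    by rewrite ltnS => Hi; rewrite gf // H.
  move=> H; split; last by rewrite H // /g eqxx.
  by move=> i Hi; rewrite -gf //; apply: H; exact: leqW.
rewrite E1 /pr Hpath (prE P (path_meas mev N g)) -EFinM /= Epath gf // /g eqxx.
rewrite Ecyl (bigD1 (f N)) //= big1 ?addr0.
  have -> : path_ev X N f `&` [set w | X N w = f N] = path_ev X N f => //.
  apply/seteqP; split => w /=; first by case.
  by move=> H; split => //; apply: H.
move=> z Hz; have -> : path_ev X N f `&` [set w | X N w = z] = set0.
  by apply/seteqP; split => w //= [H Hw]; move: Hz; rewrite -Hw H // eqxx.
by rewrite measure0 mul0r.
Qed.

Lemma markov1 d (T : measurableType d) (R : realType) (P : probability T R)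
  (St : finType) (X : nat -> T -> St) (K : St -> St -> R)
  (mev : forall n x, measurable [set w | X n w = x])
  (Hpath : forall n f, P (path_ev X n.+1 f) = (P (path_ev X n f) * (K (f n) (f n.+1))%:E)%E)
  (N : nat) (S : nat -> {set St}) (z' : St) :
  pr P (cyl X S N `&` [set w | X N.+1 w = z']) =
  \sum_(z : St) pr P (cyl X S N `&` [set w | X N w = z]) * K z z'.
Proof.
pose mu (S : nat -> {set St}) := (\sum_(i < N.+1) #|S i|)%N.
have [m Hm] : exists m, (mu S <= m)%N by exists (mu S).
elim: m S Hm => [|m IH] S Hm.
all: case: (boolP [exists i : 'I_N.+1, S i == finset.set0]) => [/existsP[i /eqP Si]|E0].
1,3: have -> : cyl X S N = set0 by
    apply/seteqP; split => w //= H; have := H i (ltn_ord i : (i <= N)%N); rewrite Si inE.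
1,2: by rewrite set0I pr0 big1 // => z _; rewrite set0I pr0 mul0r.
all: case: (boolP [exists i : 'I_N.+1, (1 < #|S i|)%N]) => [/existsP[k Hk]|E2].
1: by exfalso; move: Hm; rewrite leqn0 /mu sum_nat_eq0 => /forallP /(_ k) /eqP Hk0;
   rewrite Hk0 in Hk.
2: {
  have kN : (k <= N)%N by rewrite -ltnS.
  have [a aS] : exists a, a \in S k.
    by apply/set0Pn; rewrite -card_gt0; apply: leq_trans Hk.
  have mE : forall z n, measurable [set w | X n w = z] by move=> z n; exact: mev.
  rewrite (prI_split P mev kN aS (mE _ _)).
  rewrite (eq_bigr (fun z => pr P (cyl X (upd S k [set a]%SET) N `&` [set w | X N w = z]) * K z z'
        + pr P (cyl X (upd S k (S k :\ a)) N `&` [set w | X N w = z]) * K z z')); last first.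
    by move=> z _; rewrite (prI_split P mev kN aS (mE _ _)) mulrDl.
  rewrite big_split /=; congr (_ + _); apply: IH.
  - rewrite -ltnS; apply: leq_trans Hm; apply: mu_upd => //; by rewrite cards1.
  - rewrite -ltnS; apply: leq_trans Hm; apply: mu_upd => //.
    by rewrite (cardsD1 a (S k)) aS add1n ltnSn. }
all: apply: markov1_single => //.
all: move=> i Hi; have Hi' : (i < N.+1)%N by [].
all: move/existsPn: E0 => /(_ (Ordinal Hi')) /= H0.
all: move/existsPn: E2 => /(_ (Ordinal Hi')) /= H2.
all: by apply/eqP; rewrite eqn_leq leqNgt H2 /= card_gt0.
Qed.

Lemma kpow_ge0 (R : realType) (St : finType) (K : St -> St -> R) :
  (forall x y, 0 <= K x y) -> forall n x y, 0 <= kpow K n x y.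
Proof.
move=> K0; elim => [|n IH] x y /=; first by rewrite ler0n.
by apply: sumr_ge0 => z _; apply: mulr_ge0.
Qed.

Lemma kpow_sum1 (R : realType) (St : finType) (K : St -> St -> R) :
  stochastic K -> forall n x, \sum_y kpow K n x y = 1.
Proof.
move=> [K0 K1]; elim => [|n IH] x /=.
  by rewrite (bigD1 x) //= eqxx big1 ?addr0 // => i /negbTE; rewrite eq_sym => ->.
rewrite exchange_big /= -[RHS](K1 x); apply: eq_bigr => z _.
by rewrite -mulr_sumr IH mulr1.
Qed.

Lemma kpow_le1 (R : realType) (St : finType) (K : St -> St -> R) :
  stochastic K -> forall n x y, kpow K n x y <= 1.
Proof.
move=> HK n x y; rewrite -(kpow_sum1 HK n x) (bigD1 y) //= lerDl.
by apply: sumr_ge0 => z _; apply: kpow_ge0; case: HK.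
Qed.

Definition Kt (R : realType) (St : finType) (K : St -> St -> R) (y : St) :=
  fun z z' => K z z' * (z' != y)%:R.

Definition rr (R : realType) (St : finType) (K : St -> St -> R) (y : St) n z :=
  \sum_z' kpow (Kt K y) n z z'.

Lemma Kt_ge0 (R : realType) (St : finType) (K : St -> St -> R) y :
  (forall x y, 0 <= K x y) -> forall x z, 0 <= Kt K y x z.
Proof. by move=> K0 x z; rewrite /Kt mulr_ge0. Qed.

Lemma Kt_le (R : realType) (St : finType) (K : St -> St -> R) y :
  (forall x y, 0 <= K x y) -> forall x z, Kt K y x z <= K x z.
Proof. by move=> K0 x z; rewrite /Kt; case: (z != y); rewrite ?mulr1 ?mulr0. Qed.

Lemma rr_rec (R : realType) (St : finType) (K : St -> St -> R) y n z :
  rr K y n.+1 z = \sum_z' Kt K y z z' * rr K y n z'.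
Proof.
rewrite /rr /= exchange_big /=; apply: eq_bigr => z' _; by rewrite mulr_sumr.
Qed.

Lemma rr0 (R : realType) (St : finType) (K : St -> St -> R) y z : rr K y 0 z = 1.
Proof.
by rewrite /rr /= (bigD1 z) //= eqxx big1 ?addr0 // => i /negbTE; rewrite eq_sym => ->.
Qed.

Lemma rr_ge0 (R : realType) (St : finType) (K : St -> St -> R) y :
  (forall x y, 0 <= K x y) -> forall n z, 0 <= rr K y n z.
Proof.
move=> K0 n z; apply: sumr_ge0 => z' _; apply: kpow_ge0; exact: Kt_ge0.
Qed.

Lemma rr_mono (R : realType) (St : finType) (K : St -> St -> R) y :
  stochastic K -> forall n z, rr K y n.+1 z <= rr K y n z.
Proof.
move=> [K0 K1]; elim => [|n IH] z.
  rewrite rr_rec rr0 -(K1 z); apply: ler_sum => z' _; rewrite rr0 mulr1.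
  exact: Kt_le.
rewrite rr_rec [leRHS]rr_rec; apply: ler_sum => z' _.
by apply: ler_wpM2l; [exact: Kt_ge0|exact: IH].
Qed.

Lemma rr_anti (R : realType) (St : finType) (K : St -> St -> R) y :
  stochastic K -> forall m n z, (m <= n)%N -> rr K y n z <= rr K y m z.
Proof.
move=> HK m n z /subnK <-; elim: (n - m)%N => [|k IH]; first by rewrite add0n.
by rewrite addSn; exact: le_trans (rr_mono y HK (k + m) z) IH.
Qed.

Lemma rr_hit (R : realType) (St : finType) (K : St -> St -> R) y :
  stochastic K -> forall n z, z != y -> rr K y n z + kpow K n z y <= 1.
Proof.
move=> HK; have [K0 K1] := HK; elim => [|n IH] z zy.
  by rewrite rr0 /= (negbTE zy) addr0.
rewrite rr_rec /= -big_split /= -(K1 z); apply: ler_sum => z' _.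
case: (boolP (z' == y)) => [/eqP->|z'y].
  rewrite /Kt eqxx /= mulr0 mul0r add0r; rewrite -[leRHS]mulr1; apply: ler_wpM2l => //.
  exact: kpow_le1.
rewrite /Kt z'y mulr1 -mulrDr -[leRHS]mulr1; apply: ler_wpM2l => //; exact: IH.
Qed.

Lemma rr_unif (R : realType) (St : finType) (K : St -> St -> R) y :
  stochastic K -> irreducible K ->
  exists N, exists dl : R, [/\ 0 < dl, dl <= 1 & forall z, z != y -> rr K y N z <= 1 - dl].
Proof.
move=> HK Hirr.
suff : forall s : seq St, exists N, exists dl : R, [/\ 0 < dl, dl <= 1 &
   forall z, z \in s -> z != y -> rr K y N z <= 1 - dl].
  move=> /(_ (enum St)) [N [dl [dl0 dl1 H]]]; exists N; exists dl; split => // z; apply: H.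
  by rewrite mem_enum.
elim => [|x s [N1 [dl1 [dl10 dl11 H1]]]]; first by exists 0%N; exists 1; split.
have [n Hn] := Hirr x y.
exists (maxn N1 n); exists (Order.min dl1 (kpow K n x y)); split.
- by rewrite lt_min dl10.
- by rewrite ge_min dl11.
move=> z; rewrite in_cons => /orP[/eqP->|zs] zy.
  apply: le_trans (rr_anti y HK _ (leq_maxr N1 n)) _.
  apply: (@le_trans _ _ (1 - kpow K n x y)).
    by rewrite lerBrDr; apply: rr_hit.
  by rewrite lerD2l lerN2 ge_min lexx orbT.
apply: le_trans (rr_anti y HK _ (leq_maxl N1 n)) _.
apply: le_trans (H1 z zs zy) _.
by rewrite lerD2l lerN2 ge_min lexx.
Qed.

Lemma geo0 (R : realType) (q c : R) : 0 <= q -> q < 1 -> 0 <= c ->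
  (forall k, c <= q ^+ k) -> c = 0.
Proof.
move=> q0 q1 c0 H; apply/eqP; rewrite eq_le c0 andbT leNgt; apply/negP => cpos.
have qn : `|q| < 1 by rewrite ger0_norm.
have [k Hk] := filter_ex (cvgr0_norm_lt _ (cvg_expr qn) _ cpos).
move: Hk; rewrite /= ger0_norm ?exprn_ge0 // => Hk; by move: (H k); rewrite leNgt Hk.
Qed.

Lemma mem_meas_seq d (T : measurableType d) (St : finType) (X : nat -> T -> St)
  (mev : forall n x, measurable [set w | X n w = x]) i (s : seq St) :
  measurable [set w | X i w \in s].
Proof.
have -> : [set w | X i w \in s] = [set w | X i w \in [set x in s]%SET].
  by apply/seteqP; split => w /=; rewrite inE.
exact: mem_meas.
Qed.

Lemma pr_sum d (T : measurableType d) (R : realType) (P : probability T R)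
  (St : finType) (X : nat -> T -> St)
  (mev : forall n x, measurable [set w | X n w = x]) (A : set T) n :
  measurable A -> pr P A = \sum_(z : St) pr P (A `&` [set w | X n w = z]).
Proof.
move=> mA.
have H : forall s : seq St, uniq s ->
    pr P (A `&` [set w | X n w \in s]) = \sum_(z <- s) pr P (A `&` [set w | X n w = z]).
  elim => [|x s IH] /=.
    move=> _; rewrite big_nil.
    have -> : A `&` [set w | X n w \in [::]] = set0 by apply/seteqP; split => w //= [].
    exact: pr0.
  move=> /andP[xs us]; rewrite big_cons -IH //.
  have -> : A `&` [set w | X n w \in x :: s] =
      (A `&` [set w | X n w = x]) `|` (A `&` [set w | X n w \in s]).
    apply/seteqP; split => w /=.
      by move=> [Aw]; rewrite in_cons => /orP[/eqP->|ws]; [left|right].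
    by move=> [[Aw ->]|[Aw ws]]; split => //; rewrite in_cons ?eqxx ?ws ?orbT.
  rewrite prU //; try (apply: measurableI => //; exact: mem_meas_seq).
  apply/seteqP; split => w //= [[_ Hx] [_ Hs]]; move: xs; by rewrite -Hx Hs.
rewrite -big_enum /= -H ?enum_uniq //; congr (pr P _).
by apply/seteqP; split => w /=; [move=> Aw; split => //; rewrite mem_enum|case].
Qed.

Lemma never_null d (T : measurableType d) (R : realType) (P : probability T R)
  (St : finType) (X : nat -> T -> St) (K : St -> St -> R)
  (HX : markov_chain P X K) (Hirr : irreducible K) (y : St) :
  P.-negligible [set w | forall t, X t w != y].
Proof.
have [HK [mev Hpath]] := HX.
pose Sy := fun _ : nat => (~: [set y])%SET.
pose Av n := cyl X Sy n.
pose v n z := pr P (Av n `&` [set w | X n w = z]).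
have mAv : forall n, measurable (Av n) := fun n => cyl_meas mev Sy n.
have vy : forall n, v n y = 0.
  move=> n; rewrite /v.
  have -> : Av n `&` [set w | X n w = y] = set0.
    apply/seteqP; split => w //= [H Hy]; have := H n (leqnn n); by rewrite Hy !inE eqxx.
  exact: pr0.
have vrec : forall n z', v n.+1 z' = \sum_z v n z * Kt K y z z'.
  move=> n z'; case: (eqVneq z' y) => [->|z'y].
    rewrite vy big1 // => z _; by rewrite /Kt eqxx /= !mulr0.
  rewrite /v /Av cylS.
  have -> : cyl X Sy n `&` [set w | X n.+1 w \in Sy n.+1] `&` [set w | X n.+1 w = z'] =
      cyl X Sy n `&` [set w | X n.+1 w = z'].
    apply/seteqP; split => w /=; first by case => [[H _] ->].
    by move=> [H Hz]; do !split => //; rewrite Hz !inE z'y.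
  rewrite (markov1 mev Hpath); apply: eq_bigr => z _; by rewrite /Kt z'y mulr1.
have vN : forall N n z', v (n + N)%N z' = \sum_z v n z * kpow (Kt K y) N z z'.
  elim => [|N IH] n z'.
    rewrite addn0 (bigD1 z') //= eqxx mulr1 big1 ?addr0 // => z /negbTE ->.
    by rewrite mulr0.
  rewrite addnS -addSn IH.
  under eq_bigr do rewrite vrec mulr_suml.
  rewrite exchange_big /=; apply: eq_bigr => w _; rewrite mulr_sumr.
  by apply: eq_bigr => z _; rewrite mulrA.
have [N [dl [dl0 dl1 Hr]]] := rr_unif y HK Hirr.
pose a n := pr P (Av n).
have aE : forall n, a n = \sum_z v n z := fun n => pr_sum P mev n (mAv n).
have astep : forall n, a (n + N)%N <= (1 - dl) * a n.
  move=> n; rewrite aE; under eq_bigr do rewrite vN.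
  rewrite exchange_big /= aE mulr_sumr.
  apply: ler_sum => z _; rewrite -mulr_sumr.
  case: (eqVneq z y) => [->|zy]; first by rewrite vy !mul0r mulr0.
  rewrite mulrC; apply: ler_wpM2r; [exact: pr_ge0 | exact: Hr].
have ak : forall k, a (k * N)%N <= (1 - dl) ^+ k.
  elim => [|k IH]; first by rewrite mul0n expr0; exact: pr_le1 (mAv 0%N).
  rewrite mulSn addnC exprS; apply: le_trans (astep _) _.
  by apply: ler_wpM2l => //; rewrite subr_ge0.
pose B := \bigcap_n Av n.
have mB : measurable B := bigcapT_measurable mAv.
have pB : pr P B = 0.
  apply: (@geo0 _ (1 - dl)); [by rewrite subr_ge0 | by rewrite ltrBlDr ltrDl | exact: pr_ge0 |].
  move=> k; apply: le_trans (ak k); apply: pr_le => //.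
  by move=> w Hw; exact: (Hw (k * N)%N I).
exists B; split => //.
  by rewrite (prE P mB) pB.
by move=> w /= H n _ i Hi; rewrite !inE H.
Qed.

Unset Implicit Arguments. Set Strict Implicit. Set Printing Implicit Defensive.

Lemma ext_set (F : finType) (m : {set F}) n :
  (#|m| + n <= #|F|)%N -> exists S : {set F}, m \subset S /\ #|S| = (#|m| + n)%N.
Proof.
elim: n => [|n IH] H; first by exists m; rewrite addn0.
have H' : (#|m| + n < #|F|)%N by rewrite addnS in H.
have [S [mS cS]] := IH (ltnW H').
have : ~~ ([set: F]%SET \subset S).
  by apply/negP => /subset_leq_card; rewrite cardsT cS leqNgt H'.
case/subsetPn => a _ aS.
exists (a |: S); split.
  by apply/fintype.subsetP => x xm; rewrite !inE (fintype.subsetP mS x xm) orbT.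
by rewrite cardsU1 aS cS addnS add1n.
Qed.

Theorem theorem1 (R : realType) (F : finType) (Q s : nat)
  (prior lik : {set F} -> R)
  (Hprior0 : forall m, m \in model_space F Q -> 0 <= prior m)
  (Hprior1 : \sum_(m in model_space F Q) prior m = 1)
  (Hlik : forall m, m \in model_space F Q -> 0 < lik m)
  (St : finType) (pop : St -> {set F}) (vis : St -> {set {set F}})
  (Hpop : forall x, #|pop x| = s)
  (Hvis : forall x m, m \in vis x -> m \subset pop x /\ m \in model_space F Q)
  (Hposs : forall (S : {set F}) (m : {set F}), #|S| = s -> m \subset S ->
     m \in model_space F Q -> exists x, pop x = S /\ m \in vis x)
  (HsQ : (Q <= s)%N)
  (d : measure_display) (T : measurableType d) (P : probability T R)
  (X : nat -> T -> St) (K : St -> St -> R)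
  (HX : markov_chain P X K) (Hirr : irreducible K) :
  {ae P, forall w, forall m, m \in model_space F Q ->
     (fun Tmax => renorm_post prior lik (visited vis X Tmax w) m) @ \oo
       --> renorm_post prior lik (model_space F Q) m}.
Proof.
have Hone : forall y, {ae P, forall w, exists t, X t w = y}.
  move=> y; apply: negligibleS (never_null HX Hirr y) => w /= Hw t.
  by apply/negP => /eqP Ht; apply: Hw; exists t.
have Hall : forall l : seq St, {ae P, forall w, forall y, y \in l -> exists t, X t w = y}.
  elim => [|x l IH].
    by apply: nearW => w y; rewrite in_nil.
  apply: filterS2 IH (Hone x) => w H1 H2 y; rewrite in_cons => /orP[/eqP->|yl].
    exact: H2.
  exact: H1.
apply: filterS (Hall (enum St)) => w Hw m Hm.
have Ht : forall x : St, exists t, X t w == x.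
  move=> x; have [t Ht] : exists t, X t w = x by apply: Hw; rewrite mem_enum.
  by exists t; rewrite Ht.
pose tx x := xchoose (Ht x).
have txP : forall x, X (tx x) w = x by move=> x; apply/eqP; exact: (xchooseP (Ht x)).
have sF : (s <= #|F|)%N by rewrite -(Hpop (X 0%N w)) max_card.
have Hms : forall m', m' \in model_space F Q -> exists x, m' \in vis x.
  move=> m' Hm'; have cm : (#|m'| <= s)%N.
    by apply: leq_trans HsQ; move: Hm'; rewrite inE.
  have cF : (#|m'| + (s - #|m'|) <= #|F|)%N by rewrite subnKC.
  have [S [mS cS]] := @ext_set F m' (s - #|m'|)%N cF.
  rewrite subnKC // in cS; have [x [_ Hx]] := Hposs S m' cS mS Hm'.
  by exists x.
pose T0 := (\max_(x : St) (tx x).+1)%N.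
have Evis : forall Tm, (T0 <= Tm)%N -> visited vis X Tm w = model_space F Q.
  move=> Tm HT; apply/setP => m'; apply/idP/idP.
    by rewrite /visited => /bigcupP [t _ Hm']; exact: (Hvis _ _ Hm').2.
  move=> Hm'; have [x Hx] := Hms m' Hm'; apply/bigcupP.
  have Htx : (tx x < Tm)%N.
    by apply: leq_trans HT; rewrite /T0; exact: (@leq_bigmax St (fun x => (tx x).+1) x).
  by exists (Ordinal Htx) => //=; rewrite txP.
apply: cvg_near_cst; exists T0 => // Tm /= HT; by rewrite Evis.
Qed.
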